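(* Assume $r\neq0$ and $r+s=0$. Then: (i) For $0\le i\le d-1$: $\bar b^*_i=b^*_{2i}b^*_{2i+1}$ if $0\le i\le\lfloor d/2\rfloor-1$; $\bar b^*_i=\frac{(d+1)r}{2}b^*_{d-1}$ if $i=\lfloor d/2\rfloor$ and $d$ is odd; $\bar b^*_i=\frac{(d+1)r}{2}c^*_d$ if $i=\lfloor d/2\rfloor$ and $d$ is even; $\bar b^*_i=c^*_{2(d-i)}c^*_{2(d-i)+1}$ if $\lfloor d/2\rfloor+1\le i\le d-1$. (ii) For $1\le i\le d$: $\bar c^*_i=c^*_{2i}c^*_{2i-1}$ if $1\le i\le\lfloor d/2\rfloor$; $\bar c^*_i=\frac{(d+1)r}{2}c^*_d$ if $i=\lfloor d/2\rfloor+1$ and $d$ is odd; $\bar c^*_i=\frac{(d+1)r}{2}b^*_{d-1}$ if $i=\lfloor d/2\rfloor+1$ and $d$ is even; $\bar c^*_i=b^*_{2(d-i+1)}b^*_{2(d-i)+1}$ if $\lfloor d/2\rfloor+2\le i\le d$. (iii) For $0\le i\le d$: $\bar k^*_i=k^*_{2i}$ if $0\le i\le\lfloor d/2\rfloor$, and $\bar k^*_i=k^*_{2(d-i)+1}$ if $\lfloor d/2\rfloor+1\le i\le d$.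
   Context: Fix an integer $d\ge0$ and $r,s\in(-1,\infty)$. Write $(x)_i=x(x+1)\cdots(x+i-1)$, $(x)_0=1$. Put $b^*_i=\frac{(d-i)(i-d-s)(2d-2i+r+s+2)_i}{(2d-2i+r+s)_{i+1}}$ ($0\le i\le d-1$), $c^*_i=\frac{i(i-d-r-1)(d-i+r+s+1)_{d-i}}{(d-i+r+s+2)_{d-i+1}}$ ($1\le i\le d$), $k^*_i=\frac{b^*_0\cdots b^*_{i-1}}{c^*_1\cdots c^*_i}$ ($0\le i\le d$). Put $\bar b^*_i=\frac{(d-i)(2d-2i+1)(d-2i-r-1)(d-2i-r)}{2(2d-4i-1)(2d-4i+1)}$ ($0\le i\le d-1$), $\bar c^*_i=\frac{i(2i-1)(d-2i+r+1)(d-2i+r+2)}{2(2d-4i+1)(2d-4i+3)}$ ($1\le i\le d$), and $\bar k^*_i=\frac{\bar b^*_0\cdots\bar b^*_{i-1}}{\bar c^*_1\cdots\bar c^*_i}$ ($0\le i\le d$). *)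

(* Defs.v *)
From mathcomp Require Import all_boot all_order all_algebra.
Set Implicit Arguments. Unset Strict Implicit. Unset Printing Implicit Defensive.
Import Order.TTheory GRing.Theory Num.Theory.
Local Open Scope ring_scope.

Definition poch {R : realFieldType} (x : R) (i : nat) : R :=
  \prod_(k < i) (x + k%:R).

Section Params.
Variables (R : realFieldType) (d : nat) (r s : R).

Definition bs (i : nat) : R :=
  (d%:R - i%:R) * (i%:R - d%:R - s) * poch (2 * d%:R - 2 * i%:R + r + s + 2) i
  / poch (2 * d%:R - 2 * i%:R + r + s) i.+1.

Definition cs (i : nat) : R :=
  i%:R * (i%:R - d%:R - r - 1) * poch (d%:R - i%:R + r + s + 1) (d - i)
  / poch (d%:R - i%:R + r + s + 2) (d - i).+1.

Definition ks (i : nat) : R :=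
  (\prod_(j < i) bs j) / (\prod_(j < i) cs j.+1).

Definition bbs (i : nat) : R :=
  (d%:R - i%:R) * (2 * d%:R - 2 * i%:R + 1) * (d%:R - 2 * i%:R - r - 1)
  * (d%:R - 2 * i%:R - r)
  / (2 * (2 * d%:R - 4 * i%:R - 1) * (2 * d%:R - 4 * i%:R + 1)).

Definition bcs (i : nat) : R :=
  i%:R * (2 * i%:R - 1) * (d%:R - 2 * i%:R + r + 1) * (d%:R - 2 * i%:R + r + 2)
  / (2 * (2 * d%:R - 4 * i%:R + 1) * (2 * d%:R - 4 * i%:R + 3)).

Definition bks (i : nat) : R :=
  (\prod_(j < i) bbs j) / (\prod_(j < i) bcs j.+1).

End Params.

(* Main.v *)
Require Import Defs.
From mathcomp Require Import all_boot all_order all_algebra.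
From mathcomp Require Import ring lra zify.
Import Order.TTheory GRing.Theory Num.Theory.
Local Open Scope ring_scope.

Ltac clnat := repeat match goal with
  | H : is_true (leq _ _) |- _ => clear H
  | H : @eq nat _ _ |- _ => clear H
  | H : is_true (odd _) |- _ => clear H
  | H : is_true (~~ odd _) |- _ => clear H
  | H : is_true (_ != _) |- _ => clear H end.
Ltac nz := repeat (apply/andP; split); try assumption; try (clnat; apply/eqP => ?; lra).

Section Aux.
Variable R : realFieldType.

Lemma poch_gt0 (x : R) n : 0 < x -> 0 < poch x n.
Proof.
move=> hx; rewrite /poch; apply: prodr_gt0 => k _.
have : (0 : R) <= (k%:R : R) by rewrite ler0n.
lra.
Qed.

Lemma poch_recr (x : R) n : poch x n.+1 = poch x n * (x + n%:R).
Proof. by rewrite /poch big_ord_recr. Qed.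

Lemma poch_recl (x : R) n : poch x n.+1 = x * poch (x + 1) n.
Proof.
rewrite /poch big_ord_recl addr0; congr (_ * _).
apply: eq_bigr => k _ /=; rewrite /bump /=; ring.
Qed.

Lemma poch_ratio1 (x : R) n : 0 < x ->
  poch (x + 2) n / poch x n.+1 = (x + n%:R + 1) / (x * (x + 1)).
Proof.
move=> hx.
have h2 : poch x n.+2 = x * (x + 1) * poch (x + 2) n.
  by rewrite poch_recl poch_recl -mulrA -addrA (_ : 1 + 1 = 2 :> R) //.
have h3 : poch x n.+2 = poch x n.+1 * (x + n.+1%:R) by rewrite poch_recr.
have p1 := @poch_gt0 x n.+1 hx.
have p2 := @poch_gt0 _ n (ltr_wpDr (ler0n R 2) hx : 0 < x + 2).
have e : poch (x + 2) n = poch x n.+1 * (x + n.+1%:R) / (x * (x + 1)).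
  by rewrite -h3 h2; field; nz.
rewrite e -natr1; field; nz.
Qed.
Lemma poch_ratio2 (x y : R) n : 0 < x -> y = x + 1 ->
  poch x n / poch y n.+1 = x / ((x + n%:R) * (x + n%:R + 1)).
Proof.
move=> hx ->.
have h2 : poch x n.+2 = x * poch (x + 1) n.+1 by rewrite poch_recl.
have h3 : poch x n.+2 = poch x n * (x + n%:R) * (x + n%:R + 1).
  by rewrite poch_recr poch_recr -natr1 addrA.
have p1 := @poch_gt0 x n hx.
have p2 := @poch_gt0 (x + 1) n.+1 (ltr_wpDr ler01 hx).
have e : poch (x + 1) n.+1 = poch x n * (x + n%:R) * (x + n%:R + 1) / x.
  by rewrite -h3 h2; field; nz.
have : (0 : R) <= n%:R by rewrite ler0n.
move=> hn; rewrite e; field; nz.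
Qed.
End Aux.

Section Closed.
Variables (R : realFieldType) (d : nat) (r s : R).
Hypothesis hrs : r + s = 0.

Lemma sE : s = - r.
Proof. by apply/eqP; rewrite -subr_eq0 opprK addrC hrs. Qed.

Lemma bsE i : (i < d)%N -> bs d r s i =
  (i%:R - d%:R + r) * (2 * d%:R - i%:R + 1) / (2 * (2 * d%:R - 2 * i%:R + 1)).
Proof.
move=> hi; rewrite /bs.
have hid : (i%:R : R) + 1 <= d%:R by rewrite natr1 ler_nat.
have hi0 : (0 : R) <= i%:R by rewrite ler0n.
rewrite sE.
have hx : 0 < 2 * d%:R - 2 * i%:R + r + - r by lra.
rewrite -mulrA poch_ratio1 //.
field; nz.
Qed.

Lemma csE i : (i <= d)%N -> cs d r s i =
  i%:R * (i%:R - d%:R - r - 1) / (2 * (2 * d%:R - 2 * i%:R + 1)).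
Proof.
move=> hi; rewrite /cs.
have hid : (i%:R : R) <= d%:R by rewrite ler_nat.
have hi0 : (0 : R) <= i%:R by rewrite ler0n.
rewrite sE.
have hx : 0 < d%:R - i%:R + r + - r + 1 by lra.
rewrite -mulrA (@poch_ratio2 _ _ _ _ hx); last by ring.
rewrite natrB //; field; nz.
Qed.
End Closed.


Section Parts.
Variables (R : realFieldType) (r s : R).
Hypothesis hrs : r + s = 0.
Hypothesis hr1 : r < 1.
Hypothesis hrm : -1 < r.

Lemma p1 d i : (i < d./2)%N ->
  bbs d r i = bs d r s (2 * i) * bs d r s (2 * i).+1.
Proof.
move=> hi.
rewrite !bsE //; try lia.
have h : (2 * i + 2 <= d)%N by lia.
have : ((2 * i + 2)%:R : R) <= d%:R by rewrite ler_nat.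
have : (0 : R) <= i%:R by rewrite ler0n.
move=> h0 h1.
rewrite /bbs; field; nz.
Qed.

Lemma p2 d i : i = d./2 -> (i < d)%N -> odd d ->
  bbs d r i = (d.+1)%:R * r / 2 * bs d r s d.-1.
Proof.
move=> hi hid hod.
have hd : d = (2 * i).+1 by lia.
subst d => /=.
rewrite bsE //.
have : (0 : R) <= i%:R by rewrite ler0n.
move=> h0.
rewrite /bbs; field; nz.
Qed.

Lemma p3 d i : i = d./2 -> (i < d)%N -> ~~ odd d ->
  bbs d r i = (d.+1)%:R * r / 2 * cs d r s d.
Proof.
move=> hi hid hod.
have hd : d = (2 * i) by lia.
subst d => /=.
rewrite csE //.
have : (0 : R) <= i%:R by rewrite ler0n.
move=> h0.
rewrite /bbs; field; nz.
Qed.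

Lemma p4 d i : (d./2 + 1 <= i)%N -> (i < d)%N ->
  bbs d r i = cs d r s (2 * (d - i)) * cs d r s (2 * (d - i)).+1.
Proof.
move=> h1 h2.
have [j hj] : exists j, d = (i + j)%N by exists (d - i)%N; lia.
have hji : (j + 1 <= i)%N by lia.
subst d; rewrite addKn.
rewrite !csE //; try lia.
have : ((j + 1)%:R : R) <= i%:R by rewrite ler_nat.
have : (0 : R) <= j%:R by rewrite ler0n.
move=> h0 h3.
rewrite /bbs; field; nz.
Qed.

Lemma q1 d i : (1 <= i)%N -> (i <= d./2)%N ->
  bcs d r i = cs d r s (2 * i) * cs d r s (2 * i).-1.
Proof.
move=> h1 h2.
have [k hk] : exists k, i = k.+1 by exists i.-1; lia.
subst i.
have -> : (2 * k.+1).-1 = (2 * k).+1 by lia.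
have h : (2 * k + 2 <= d)%N by lia.
rewrite !csE //; try lia.
have : ((2 * k + 2)%:R : R) <= d%:R by rewrite ler_nat.
have : (0 : R) <= (k%:R : R) by rewrite ler0n.
move=> h0 h3.
rewrite /bcs; field; nz.
Qed.

Lemma q2 d i : i = (d./2).+1 -> (i <= d)%N -> odd d ->
  bcs d r i = (d.+1)%:R * r / 2 * cs d r s d.
Proof.
move=> hi hid hod.
have [k hk] : exists k, i = k.+1 by exists i.-1; lia.
have hd : d = (2 * k).+1 by lia.
clear hi; subst d i.
rewrite csE //.
have : (0 : R) <= (k%:R : R) by rewrite ler0n.
move=> h0.
rewrite /bcs; field; nz.
Qed.

Lemma q3 d i : i = (d./2).+1 -> (i <= d)%N -> ~~ odd d ->
  bcs d r i = (d.+1)%:R * r / 2 * bs d r s d.-1.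
Proof.
move=> hi hid hod.
have [k hk] : exists k, i = k.+2 by exists i.-2; lia.
have hd : d = (2 * k).+2 by lia.
clear hi; subst d i => /=.
rewrite bsE //.
have : (0 : R) <= (k%:R : R) by rewrite ler0n.
move=> h0.
rewrite /bcs; field; nz.
Qed.

Lemma q4 d i : (d./2 + 2 <= i)%N -> (i <= d)%N ->
  bcs d r i = bs d r s (2 * (d - i + 1)) * bs d r s (2 * (d - i)).+1.
Proof.
move=> h1 h2.
have [j hj] : exists j, d = (i + j)%N by exists (d - i)%N; lia.
have hji : (j + 3 <= i)%N by lia.
subst d; rewrite addKn.
rewrite !bsE //; try lia.
have : ((j + 3)%:R : R) <= i%:R by rewrite ler_nat.
have : (0 : R) <= j%:R by rewrite ler0n.
move=> h0 h3.
rewrite /bcs; field; nz.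
Qed.
End Parts.

Section Third.
Variables (R : realFieldType) (r s : R).
Hypothesis hrs : r + s = 0.
Hypothesis hr1 : r < 1.
Hypothesis hrm : -1 < r.

Lemma bks_rec d i : bks d r i.+1 = bks d r i * (bbs d r i / bcs d r i.+1).
Proof. by rewrite /bks !big_ord_recr /= -mulf_div. Qed.

Lemma ks_rec d i : ks d r s i.+1 = ks d r s i * (bs d r s i / cs d r s i.+1).
Proof. by rewrite /ks !big_ord_recr /= -mulf_div. Qed.

Lemma bs_neq0 d k : (k < d)%N -> bs d r s k != 0.
Proof.
move=> hk; rewrite bsE //.
have : (k%:R : R) + 1 <= d%:R by rewrite natr1 ler_nat.
have : (0 : R) <= (k%:R : R) by rewrite ler0n.
move=> h0 h1.
have h2 := hr1; have h3 := hrm.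
rewrite !mulf_neq0 ?invr_neq0 ?mulf_neq0 //; clnat; apply/eqP => ?; lra.
Qed.

Lemma cs_neq0 d k : (1 <= k)%N -> (k <= d)%N -> cs d r s k != 0.
Proof.
move=> hk1 hk; rewrite csE //.
have : ((k)%:R : R) <= d%:R by rewrite ler_nat.
have : (1 : R) <= (k%:R : R) by rewrite ler1n.
move=> h0 h1.
have h2 := hr1; have h3 := hrm.
rewrite !mulf_neq0 ?invr_neq0 ?mulf_neq0 //; clnat; apply/eqP => ?; lra.
Qed.

Lemma lower d i : (i <= d./2)%N -> bks d r i = ks d r s (2 * i).
Proof.
elim: i => [|i IH] hi.
  by rewrite muln0 /bks /ks !big_ord0.
rewrite bks_rec IH; last by lia.
rewrite (@p1 R r s hrs hr1 hrm) ?(@q1 R r s hrs hr1 hrm) //; try lia.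
have -> : (2 * i.+1 = (2 * i).+2)%N by lia.
rewrite !ks_rec /= invfM; ring.
Qed.

Lemma upper d n (hr0 : r != 0) : forall i, i = (d./2 + 1 + n)%N -> (i <= d)%N ->
  bks d r i = ks d r s (2 * (d - i)).+1.
Proof.
elim: n => [|n IH] i hi hid.
  have [m hm] : exists m, d./2 = m by exists d./2.
  rewrite hm addn0 addn1 in hi; subst i.
  rewrite bks_rec lower; last by lia.
  have hK : ((d.+1)%:R * r / 2 : R) != 0.
    rewrite !mulf_neq0 ?invr_neq0 //; by rewrite pnatr_eq0.
  case/boolP: (odd d) => hod.
    rewrite (@p2 R r s hrs hr1 hrm _ m) ?(@q2 R r s hrs hr1 hrm _ m.+1) //; try lia.
    have hd : d = (2 * m).+1 by lia.
    have hc := @cs_neq0 d d ltac:(lia) (leqnn d).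
    subst d => /=.
    have -> : (2 * ((2 * m).+1 - m.+1) = 2 * m)%N by lia.
    have : (0 : R) <= m%:R by rewrite ler0n.
    move=> h0; rewrite ks_rec; field; nz.
  rewrite (@p3 R r s hrs hr1 hrm _ m) ?(@q3 R r s hrs hr1 hrm _ m.+1) //; try lia.
  have [k hk] : exists k, m = k.+1 by exists m.-1; lia.
  have hd : d = (2 * k).+2 by lia.
  have hc := @cs_neq0 d d ltac:(lia) (leqnn d).
  have hb := @bs_neq0 d d.-1 ltac:(lia).
  clear hm; subst d m => /=.
  have -> : (2 * ((2 * k).+2 - k.+2) = 2 * k)%N by lia.
  have -> : (2 * k.+1 = (2 * k).+2)%N by lia.
  have : (0 : R) <= k%:R by rewrite ler0n.
  move=> h0; rewrite ks_rec /=; field; nz.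
have [i' hi'] : exists i', i = i'.+1 by exists i.-1; lia.
rewrite hi' in hi hid *.
rewrite bks_rec (IH i') //; try lia.
rewrite (@p4 R r s hrs hr1 hrm) ?(@q4 R r s hrs hr1 hrm) //; try lia.
have [j hj] : exists j, (d - i'.+1 = j)%N by exists (d - i'.+1)%N.
have -> : (2 * (d - i') = (2 * j).+2)%N by lia.
have -> : (2 * (d - i'.+1 + 1) = (2 * j).+2)%N by lia.
rewrite hj.
have h1 := @bs_neq0 d (2 * j).+1 ltac:(lia).
have h2 := @bs_neq0 d (2 * j).+2 ltac:(lia).
have h3 := @cs_neq0 d (2 * j).+2 isT ltac:(lia).
have h4 := @cs_neq0 d (2 * j).+3 isT ltac:(lia).
have h5 := @cs_neq0 d (2 * j).+1 isT ltac:(lia).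
rewrite !ks_rec; field; nz.
Qed.
End Third.

Theorem lemma3p3 (R : realFieldType) (d : nat) (r s : R)
  (hr : -1 < r) (hs : -1 < s) (hr0 : r != 0) (hrs : r + s = 0) :
  let K := (d.+1)%:R * r / 2 in
  (* (i) *)
  [/\ (forall i : nat, (i < d./2)%N ->
          bbs d r i = bs d r s (2 * i) * bs d r s (2 * i).+1),
      (forall i : nat, i = d./2 -> (i < d)%N -> odd d ->
          bbs d r i = K * bs d r s d.-1),
      (forall i : nat, i = d./2 -> (i < d)%N -> ~~ odd d ->
          bbs d r i = K * cs d r s d),
      (forall i : nat, (d./2 + 1 <= i)%N -> (i < d)%N ->
          bbs d r i = cs d r s (2 * (d - i)) * cs d r s (2 * (d - i)).+1)
  &
  (* (ii) *)
  [/\ (forall i : nat, (1 <= i)%N -> (i <= d./2)%N ->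
          bcs d r i = cs d r s (2 * i) * cs d r s (2 * i).-1),
      (forall i : nat, i = (d./2).+1 -> (i <= d)%N -> odd d ->
          bcs d r i = K * cs d r s d),
      (forall i : nat, i = (d./2).+1 -> (i <= d)%N -> ~~ odd d ->
          bcs d r i = K * bs d r s d.-1),
      (forall i : nat, (d./2 + 2 <= i)%N -> (i <= d)%N ->
          bcs d r i = bs d r s (2 * (d - i + 1)) * bs d r s (2 * (d - i)).+1)
  &
  (* (iii) *)
  (forall i : nat, (i <= d)%N ->
     ((i <= d./2)%N -> bks d r i = ks d r s (2 * i)) /\
     ((d./2 + 1 <= i)%N -> bks d r i = ks d r s (2 * (d - i)).+1))]].
Proof.
move=> K; rewrite /K; clear K.
have hr1 : r < 1 by lra.
split; last split.
- by move=> i hi; exact: (@p1 R r s hrs hr1 hr d i).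
- by move=> i hi hid hod; exact: (@p2 R r s hrs hr1 hr d i).
- by move=> i hi hid hod; exact: (@p3 R r s hrs hr1 hr d i).
- by move=> i hi hid; exact: (@p4 R r s hrs hr1 hr d i).
- by move=> i hi hid; exact: (@q1 R r s hrs hr1 hr d i).
- by move=> i hi hid hod; exact: (@q2 R r s hrs hr1 hr d i).
- by move=> i hi hid hod; exact: (@q3 R r s hrs hr1 hr d i).
- by move=> i hi hid; exact: (@q4 R r s hrs hr1 hr d i).
- move=> i hid; split => hi.
    exact: (@lower R r s hrs hr1 hr d i).
  apply: (@upper R r s hrs hr1 hr d (i - (d./2 + 1))%N hr0) => //; lia.
Qed.
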